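(* Let $m,n\ge0$ be integers with $m+n$ even. A permutation $x=(x_1x_2\cdots x_{m+n})$ of $[m+n]$ is an alternating $\mathcal B_{m,n}$-permutation if and only if $x\in\mathrm{Alt}_{\mathrm{Hoch}(m,n)}$.
   Context: For integers $i\le j$, $[i,j]=\{\ell\in\mathbb Z: i\le\ell\le j\}$ and $[N]=[1,N]$. $\mathcal B_{m,n}$ is the collection of nonempty subsets $I\subseteq[m+n]$ such that whenever $|I|\ge2$, $I\cap[m+1,m+n]$ is either $\emptyset$ or $[m+r,m+n]$ for some $1\le r\le n$ (a building set on $[m+n]$). For a building set $\mathcal B$ on $S$ (collection of nonempty subsets of $S$ containing all singletons, closed under unions of intersecting members; its connected components are its inclusion-maximal members; $\mathcal B|_I=\{J\in\mathcal B:J\subseteq I\}$) with $|S|=N$, a $\mathcal B$-permutation is a sequence $(x_1\cdots x_N)$ listing each element of $S$ once such that for each $i$, $x_i$ and $\max\{x_1,\dots,x_i\}$ lie in the same connected component of $\mathcal B|_{\{x_1,\dots,x_i\}}$; it is alternating if $x_1>x_2<x_3>\cdots$. $\mathrm{Alt}_{\mathrm{Hoch}(m,n)}$ is the set of alternating permutations $(x_1\cdots x_{m+n})$ of $[m+n]$ such that for all $i,j$: $m+n\ge x_i>x_j\ge m+1$ implies $i<j$. *)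

(* Defs.v *)
From mathcomp Require Import all_boot finmap.
Set Implicit Arguments. Unset Strict Implicit. Unset Printing Implicit Defensive.
Open Scope fset_scope.

Definition interval (i j : nat) : {fset nat} := [fset k in iota i (j.+1 - i)].

Definition B_mn (m n : nat) (I : {fset nat}) : bool :=
  [&& I != fset0, I `<=` interval 1 (m + n) &
     (2 <= #|` I|) ==>
       ((I `&` interval (m + 1) (m + n) == fset0) ||
        has (fun r => I `&` interval (m + 1) (m + n) == interval (m + r) (m + n))
            (iota 1 n))].

(* J is a connected component of B|_S: an inclusion-maximal member of B|_S. *)
Definition is_component (B : {fset nat} -> bool) (S J : {fset nat}) : Prop :=
  [/\ B J, J `<=` S &
      forall K : {fset nat}, B K -> K `<=` S -> J `<=` K -> K = J].

Definition same_component (B : {fset nat} -> bool) (S : {fset nat}) (a b : nat) : Prop :=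
  exists J, is_component B S J /\ a \in J /\ b \in J.

(* x = (x_1 ... x_N) (stored 0-indexed) is a B-permutation of [N]. *)
Definition is_B_perm (B : {fset nat} -> bool) (N : nat) (x : seq nat) : Prop :=
  perm_eq x (iota 1 N) /\
  forall i, i < size x ->
    same_component B [fset y in take i.+1 x] (nth 0 x i) (\max_(y <- take i.+1 x) y).

(* x_1 > x_2 < x_3 > ... ; 0-indexed position i even means x_{i+1} with i+1 odd. *)
Definition alternating (x : seq nat) : bool :=
  all (fun i => if ~~ odd i then nth 0 x i.+1 < nth 0 x i else nth 0 x i < nth 0 x i.+1)
      (iota 0 (size x).-1).

Definition Alt_Hoch (m n : nat) (x : seq nat) : Prop :=
  [/\ perm_eq x (iota 1 (m + n)), alternating x &
      forall i j, i < size x -> j < size x ->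
        m + n >= nth 0 x i -> nth 0 x i > nth 0 x j -> nth 0 x j >= m + 1 -> i < j].

(* Main.v *)
Require Import Defs.
From mathcomp Require Import all_boot finmap.
From mathcomp Require Import zify.
Open Scope fset_scope.
Lemma memfs (s : seq nat) k : (k \in [fset y in s]) = (k \in s).
Proof. by rewrite inE. Qed.
Lemma max_ge (s : seq nat) k : k \in s -> k <= \max_(y <- s) y.
Proof. elim: s => // a s IH; rewrite inE big_cons => /orP[/eqP->|/IH]; lia. Qed.
Lemma max_le (s : seq nat) b : all (fun y => y <= b) s -> \max_(y <- s) y <= b.
Proof. elim: s => [|a s IH]; rewrite ?big_nil ?big_cons //= => /andP[h /IH]; lia. Qed.
Lemma max_in (s : seq nat) : s != [::] -> \max_(y <- s) y \in s.
Proof. elim: s => // a s IH _; rewrite big_cons inE.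
case: s IH => [|b s] IH; first by rewrite big_nil maxn0 eqxx.
have /(_ isT) := IH; set M := \max_(_ <- _) _ => h.
rewrite /maxn; case: ltnP => _; by rewrite ?h ?orbT ?eqxx. Qed.
Lemma in_take_lt (s : seq nat) t i : uniq s -> i < size s -> nth 0 s i \in take t s -> i < t.
Proof.
move=> u hi h. have := index_uniq 0 hi u. set y := nth 0 s i in h *.
rewrite -[in index _ s](cat_take_drop t s) index_cat h => <-.
have := index_mem y (take t s); rewrite h size_take => /esym. case: ifP; lia.
Qed.
Lemma mem_interval i j k : (k \in interval i j) = (i <= k <= j).
Proof. rewrite /interval inE mem_iota; apply/idP/idP; lia. Qed.

Lemma comp_up m n J a b c k : B_mn m n J -> a \in J -> b \in J -> a != b ->
  m + 1 <= c -> c \in J -> c <= k <= m + n -> k \in J.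
Proof.
case/and3P=> _ _ H ha hb ab hc cJ hk.
have h2 : 2 <= #|` J|.
  have : [fset a; b] `<=` J by apply/fsubsetP => z; rewrite !inE => /orP[]/eqP->.
  by move/fsubset_leq_card; rewrite cardfs2 ab.
move: (implyP H h2) => /orP[/eqP E|/hasP[r _ /eqP E]].
  have : c \in J `&` interval (m+1) (m+n) by rewrite inE cJ mem_interval; lia.
  by rewrite E inE.
have : c \in J `&` interval (m+1) (m+n) by rewrite inE cJ mem_interval; lia.
rewrite E mem_interval => hc2.
have : k \in J `&` interval (m+1) (m+n) by rewrite E mem_interval; lia.
by rewrite inE => /andP[].
Qed.

Arguments comp_up {m n J a b c k}.
Definition upc m n (s : seq nat) := forall k k', k \in s -> m + 1 <= k -> k < k' <= m + n -> k' \in s.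

Lemma B_of_up m n (s : seq nat) : s != [::] -> all (fun y => 1 <= y <= m + n) s ->
  upc m n s -> B_mn m n [fset y in s].
Proof.
move=> ne /allP hall hup; apply/and3P; split.
- case: s ne hall hup => // a s _ _ _; apply/eqP => /fsetP /(_ a); by rewrite !inE eqxx.
- apply/fsubsetP => z; rewrite inE mem_interval => /hall; lia.
apply/implyP => _.
case: (boolP (has (fun k => m + 1 <= k) s)) => [hh|hn]; last first.
  apply/orP; left; apply/eqP/fsetP => z; rewrite in_fsetI memfs mem_interval inE.
  apply/negbTE; apply/negP => /andP[zs hz]; move/hasPn: hn => /(_ z zs); lia.
have exP : exists l, (l \in s) && (m + 1 <= l).
  by case/hasP: hh => l ls hl; exists l; rewrite ls hl.
case: (ex_minnP exP) => l /andP[ls hl] lmin.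
apply/orP; right; apply/hasP; exists (l - m).
  rewrite mem_iota; have := hall _ ls; lia.
apply/eqP/fsetP => z; rewrite in_fsetI memfs !mem_interval.
apply/idP/idP.
- case/andP=> zs hz; have := lmin z; rewrite zs /=; lia.
- move=> hz; case: (ltngtP l z) => lz.
  + by rewrite (hup l z) //=; lia.
  + lia.
  + by subst z; rewrite ls /=; lia.
Qed.

Lemma alt_at x i : alternating x -> i.+1 < size x ->
  if ~~ odd i then nth 0 x i.+1 < nth 0 x i else nth 0 x i < nth 0 x i.+1.
Proof. move=> /allP H hi; apply: (H i); rewrite mem_iota; lia. Qed.

Lemma mem_take_nth (x : seq nat) t i : i < t -> i < size x -> nth 0 x i \in take t x.
Proof. move=> it ix; rewrite -(nth_take 0 it); apply: mem_nth; rewrite size_take; by case: ifP. Qed.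

Close Scope fset_scope.
Theorem proposition6p1 (m n : nat) : ~~ odd (m + n) ->
  forall x : seq nat, perm_eq x (iota 1 (m + n)) ->
    ((is_B_perm (B_mn m n) (m + n) x /\ alternating x) <-> Alt_Hoch m n x).
Proof.
move=> ev x px.
have sx : size x = m + n by rewrite (perm_size px) size_iota.
have ux : uniq x by rewrite (perm_uniq px) iota_uniq.
have memx k : (k \in x) = (1 <= k <= m + n).
  by rewrite (perm_mem px) mem_iota; apply/idP/idP; lia.
have rng t : all (fun y => 1 <= y <= m + n) (take t x).
  by apply/allP => y /mem_take; rewrite memx.
have rng' t z : z \in take t x -> 1 <= z <= m + n.
  by move/mem_take; rewrite memx.
split.
- case=> [[_ hB] alt]; split => //.
  have key t : t <= m + n -> upc m n (take t x).
    elim: t => [|i IH] hi; first by move=> k k'; rewrite take0.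
    have ix : i < size x by rewrite sx.
    rewrite (take_nth 0 ix); set y := nth 0 x i; set s := take i x.
    have hy : 1 <= y <= m + n by rewrite -memx mem_nth.
    have IH' := IH (ltnW hi).
    move=> k k'; rewrite mem_rcons inE => /orP[/eqP->|ks]; last first.
      by move=> hk hk'; rewrite mem_rcons inE (IH' k k' ks hk hk') orbT.
    move=> hy1 hk'.
    case: (boolP (has (fun k => m + 1 <= k) s)) => [/hasP[l ls hl]|hn].
    + have Ns : m + n \in s.
        case: (ltngtP l (m + n)) => hl2.
        * by apply: (IH' l) => //; lia.
        * by move: (rng' i l ls); lia.
        * by rewrite -hl2.
      have yN : y != m + n.
        apply/eqP => e; move: Ns; rewrite -e => /(in_take_lt _ _ _ ux ix); lia.
      have := hB i ix; rewrite (take_nth 0 ix) -/y -/s.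
      case=> J [[BJ JS _] [yJ MJ]].
      have hM : \max_(z <- rcons s y) z = m + n.
        apply/eqP; rewrite eqn_leq max_ge ?mem_rcons ?inE ?Ns ?orbT // andbT.
        apply: max_le; rewrite all_rcons /= (andP hy).2 /=; apply/allP => z zs; by case/andP: (rng' i z zs).
      rewrite hM in MJ.
      have := comp_up BJ yJ MJ yN hy1 yJ (_ : y <= k' <= m + n).
      move=> /(_ ltac:(by case/andP: hk' => /ltnW -> ->)) kJ.
      by move: (fsubsetP JS k' kJ); rewrite memfs.
    + exfalso.
      have Hn z : z \in s -> z < m + 1.
        by move=> zs; move/hasPn: hn => /(_ z zs); lia.
      case: (boolP (odd i)) => oi.
      * have i0 : 0 < i by case: i oi {IH IH' hi ix y hy hy1 hk' s hn Hn}.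
        have := alt_at x i.-1 alt; rewrite prednK // ?sx //.
        have e : ~~ odd i.-1 by clear -oi i0; move: oi i0; case: i => // j /=; rewrite negbK.
        rewrite e => /(_ hi) h.
        have := Hn _ (mem_take_nth x i i.-1 ltac:(lia) ltac:(lia)).
        rewrite -/y in h; lia.
      * have i1 : i.+1 < m + n.
          case: (ltngtP i.+1 (m+n)) => // h; first lia.
          by move: ev; rewrite -h /= oi.
        have i1x : i.+1 < size x by rewrite sx.
        have := alt_at x i alt i1x; rewrite oi /= -/y => hz.
        have := hB i.+1 i1x; case=> J [[BJ JS _] [zJ MJ]].
        have Mle : \max_(y <- take i.+2 x) y <= m + n.
          by apply: max_le; apply/allP => w /(rng' _ w) /andP[].
        have yM : y <= \max_(y <- take i.+2 x) y.
          by apply: max_ge; apply: mem_take_nth => //; rewrite sx.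
        have zM : nth 0 x i.+1 != \max_(y <- take i.+2 x) y by apply/eqP => e; move: hz; rewrite e ltnNge yM.
        have NJ := comp_up BJ zJ MJ zM (_ : m+1 <= _) MJ (_ : _ <= m+n <= m+n).
        have := fsubsetP JS _ (NJ (leq_trans hy1 yM) ltac:(by rewrite Mle leqnn)).
        rewrite memfs (take_nth 0 i1x) (take_nth 0 ix) -/y -/s !mem_rcons !inE.
        have Hy2 : y <= m + n by case/andP: hy.
        move=> /orP[/eqP e|]; first by move: hz; rewrite -e ltnNge Hy2.
        rewrite mem_rcons inE => /orP[/eqP e|Ns].
          by move: hk'; rewrite -e ltnNge => /andP[/negP].
        by have := Hn _ Ns; rewrite ltnNge (leq_trans hy1 Hy2).
  move=> i j hi hj _ hij hj1.
  have hup := key j.+1 ltac:(by rewrite -sx).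
  have := hup _ _ (mem_take_nth x j.+1 j (ltnSn j) hj) hj1.
  move=> /(_ (nth 0 x i)) /(_ ltac:(by rewrite hij; move: (mem_nth 0 hi); rewrite memx => /andP[])).
  move=> /(in_take_lt _ _ _ ux hi); rewrite ltnS leq_eqVlt => /orP[/eqP e|//].
  by move: hij; rewrite e ltnn.
- case=> _ alt H; split => //; split => // i hi.
  have upt t : upc m n (take t x).
    move=> k k' kt hk /andP[kk' k'N].
    have kx := mem_take kt.
    have k'x : k' \in x by rewrite memx k'N andbT; apply: leq_ltn_trans kk'.
    have ha : index k x < size x by rewrite index_mem.
    have hb : index k' x < size x by rewrite index_mem.
    have at_ : index k x < t.
      by rewrite -(nth_index 0 kx) in kt; exact: in_take_lt _ _ _ ux ha kt.
    have := H _ _ hb ha; rewrite !nth_index // => /(_ k'N kk' hk) ba.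
    rewrite -(nth_index 0 k'x); apply: mem_take_nth => //; exact: ltn_trans ba at_.
  have ne : take i.+1 x != [::] by rewrite (take_nth 0 hi) -cats1; case: (take i x).
  exists [fset y in take i.+1 x]%fset; split; [split|split].
  + exact: B_of_up.
  + exact: fsubset_refl.
  + by move=> K _ KS SK; apply/eqP; rewrite eqEfsubset KS SK.
  + by rewrite memfs; apply: mem_take_nth.
  + by rewrite memfs; apply: max_in.
Qed.
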